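(* Let $V$ be a set and let $(\mathcal{H}_\ell)_{\ell\in\mathbb{Z}}$ be a hypergraph chain over $V$ with Helly Number $h$ and Colorful Helly Number $k\ge h$. Then there exists a function $\beta:(0,1)\to[0,1)$ with $\lim_{\alpha\to1}\beta(\alpha)=1$ such that for every $\ell\in\mathbb{Z}$, every finite set $S\subset V$ and every $\alpha\in(0,1)$, if $\left|\mathcal{H}_\ell\cap\binom{S}{h}\right|\ge\alpha\binom{|S|}{h}$, then there exists $S'\subset S$ with $|S'|\ge\beta(\alpha)|S|$ and $S'\in\mathcal{H}_{\ell+3}$.
   Context: A hypergraph on a base set $V$ is a family $\mathcal{H}\subset 2^V$; it is downwards closed if $H\in\mathcal{H}$ and $G\subset H$ imply $G\in\mathcal{H}$. A hypergraph chain over $V$ is a sequence $(\mathcal{H}_\ell)_{\ell\in\mathbb{Z}}$ of downwards closed hypergraphs on $V$ with $\mathcal{H}_\ell\subset\mathcal{H}_{\ell+1}$ for all $\ell$. It has Helly Number $h$ if for every $\ell\in\mathbb{Z}$ and every $S\subseteq V$, $\binom{S}{h}\subset\mathcal{H}_\ell$ implies $S\in\mathcal{H}_{\ell+1}$ (where $\binom{S}{h}$ is the set of $h$-element subsets of $S$). For $S_1,\dots,S_k\subset V$, a set $F\subset V$ is a colorful selection if there is a surjective map $\phi:\{1,\dots,k\}\to F$ with $\phi(i)\in S_i$ for all $i$; the set of these is $S_1\otimes\dots\otimes S_k$. The chain has Colorful Helly Number $k$ if whenever $S_1,\dots,S_k$ are finite subsets of $V$ and $\ell\in\mathbb{Z}$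 with $S_1\otimes\dots\otimes S_k\subset\mathcal{H}_\ell$, some $S_j\in\mathcal{H}_{\ell+1}$. *)

(* Defs.v *)
From HB Require Import structures.
From mathcomp Require Import all_boot all_order all_algebra.
From mathcomp Require Import finmap.
From mathcomp Require Import all_classical all_reals all_analysis.
Set Implicit Arguments. Unset Strict Implicit. Unset Printing Implicit Defensive.
Import Order.TTheory GRing.Theory Num.Theory.
Local Open Scope classical_set_scope.
Local Open Scope ring_scope.

Definition hypergraph (V : Type) := set (set V).

Definition downwards_closed (V : Type) (H : hypergraph V) : Prop :=
  forall A B : set V, H A -> B `<=` A -> H B.

Definition hypergraph_chain (V : Type) (H : int -> hypergraph V) : Prop :=
  (forall l, downwards_closed (H l)) /\ (forall l, H l `<=` H (l + 1)).

Definition is_hsubset (V : choiceType) (h : nat) (S G : set V) : Prop :=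
  G `<=` S /\ exists F : {fset V}, #|` F |%fset = h /\ G = [set` F].

Definition helly_number (V : choiceType) (H : int -> hypergraph V) (h : nat) : Prop :=
  forall (l : int) (S : set V),
    (forall G, is_hsubset h S G -> H l G) -> H (l + 1) S.

(* Colorful selections of S_1,...,S_k are exactly the images of maps
   phi : 'I_k -> V with phi i \in S_i (phi surjective onto its image). *)
Definition colorful_selection (V : choiceType) (k : nat)
    (S : 'I_k -> {fset V}) (F : set V) : Prop :=
  exists phi : 'I_k -> V, (forall i, phi i \in S i) /\ F = range phi.

Definition colorful_helly_number (V : choiceType) (H : int -> hypergraph V) (k : nat) : Prop :=
  forall (S : 'I_k -> {fset V}) (l : int),
    (forall F, colorful_selection S F -> H l F) ->
    exists j : 'I_k, H (l + 1) [set` S j].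

Definition count_hedges (V : choiceType) (H : hypergraph V) (h : nat) (S : {fset V}) : nat :=
  #|` [fset G in fpowerset S | (#|` G | == h)%fset && `[< H [set` G] >] ] |%fset.

(* Main.v *)
Require Import Defs.
From HB Require Import structures.
From mathcomp Require Import all_boot all_order all_algebra.
From mathcomp Require Import finmap.
From mathcomp Require Import all_classical all_reals all_analysis.
From mathcomp Require Import zify ring lra.
Import Order.TTheory GRing.Theory Num.Theory numFieldNormedType.Exports.
Local Open Scope classical_set_scope.
Local Open Scope ring_scope.
Set Implicit Arguments. Unset Strict Implicit. Unset Printing Implicit Defensive.

Section Comb.
Local Open Scope fset_scope.
Lemma card_hsub (V : choiceType) (S : {fset V}) (h : nat) :
  (#|` [fset G in fpowerset S | #|` G|%fset == h] | <= 'C(#|` S|, h))%N.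
Proof.
set Pset := finset (fun Y : {set S} => #|Y| == h).
pose phi := fun Y : {set S} => [fsetval k in Y].
have H1 : (#|` [fset G in fpowerset S | #|` G| == h]| <= #|` [fset phi Y | Y in Pset]|)%N.
  apply: fsubset_leq_card; apply/fsubsetP => G.
  rewrite !inE fpowersetE => /andP[GS /eqP Gh].
  apply/imfsetP; exists (fsub S G); last by rewrite /phi fsubK.
  by rewrite /= inE card_fsub // Gh.
apply: (leq_trans H1).
apply: (leq_trans (leq_imfset_card _ _ _)).
have -> : size (enum_finmem (mem Pset)) = #|Pset|.
  rewrite -(card_uniqP (enum_finmem_uniq _)).
  by apply: eq_card => x; rewrite enum_finmemE.
by rewrite card_draws -cardfE.
Qed.

Lemma greedy (V : choiceType) (h : nat) (bad : {fset V} -> Prop) :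
  (0 < h)%N -> forall S : {fset V}, exists (r : nat) (e : nat -> {fset V}) (S' : {fset V}),
  [/\ S' `<=` S, (#|` S| <= #|` S'| + h * r)%N,
   (forall p, (p < r)%N -> e p `<=` S /\ #|` e p| = h /\ bad (e p)),
   (forall p p' v, (p < r)%N -> (p' < r)%N -> v \in e p -> v \in e p' -> p = p') &
   (forall G, G `<=` S' -> #|` G| = h -> ~ bad G)].
Proof.
move=> h0 S.
have [m Hm] : exists m, (#|` S| < m)%N by exists (#|` S|).+1.
elim: m S Hm => [|m IH] S Hm; first by [].
have [[G [GS [Gh Gb]]]|nobad] :=
  pselect (exists G, G `<=` S /\ #|` G| = h /\ bad G); last first.
  exists 0%N, (fun _ => fset0), S; split => //; first by rewrite muln0 addn0.
  by move=> G GS Gh Gb; apply: nobad; exists G.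
have [|r [e [S' [S'S Scard eP edisj S'good]]]] := IH (S `\` G).
  rewrite cardfsDS // -ltnS (leq_trans _ Hm) // ltnS.
  by rewrite ltn_subrL Gh h0 /= (leq_trans h0) // -Gh fsubset_leq_card.
exists r.+1, (fun p => if p is p'.+1 then e p' else G), S'; split.
- exact: (fsubset_trans S'S (fsubsetDl _ _)).
- move: Scard; rewrite cardfsDS // Gh mulnS => Hc.
  have : (h <= #|` S|)%N by rewrite -Gh fsubset_leq_card.
  lia.
- case=> [|p] //= Hp; have [H1 [H2 H3]] := eP p Hp.
  by split => //; exact: (fsubset_trans H1 (fsubsetDl _ _)).
- have ein p v : (p < r)%N -> v \in e p -> v \notin G.
    move=> Hp; have [H1 _] := eP p Hp => /(fsubsetP H1).
    by rewrite inE => /andP[].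
  case=> [|p] [|p'] v //= Hp Hp'.
  + by move=> vG /(ein _ _ Hp'); rewrite vG.
  + by move=> /(ein _ _ Hp) /negP.
  + by move=> H1 H2; rewrite (edisj p p' v).
- exact: S'good.
Qed.

Lemma counting (V : choiceType) (h k q : nat) (G : 'I_k -> 'I_q -> {fset V})
    (M0 : {fset {fset V}}) :
  (forall i j i' j' v, v \in G i j -> v \in G i' j' -> i = i' /\ j = j') ->
  (forall x : {ffun 'I_k -> 'I_q}, exists F, [/\ F \in M0, #|` F| = h &
      exists phi : 'I_k -> V, (forall i, phi i \in G i (x i)) /\
         (forall g, g \in F -> exists i, phi i = g)]) ->
  (h <= k)%N -> (0 < q)%N ->
  (q ^ k <= #|` M0| * q ^ (k - h))%N.
Proof.
move=> disj Hx hk q0.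
have [f Hf] := choice Hx.
have fib x i j v : v \in f x -> v \in G i j -> x i = j.
  move=> vf vG; have [_ _ [phi [Hphi Hcov]]] := Hf x.
  have [i1 Hi1] := Hcov v vf.
  have := Hphi i1; rewrite Hi1 => vG1.
  by have [-> ->] := disj _ _ _ _ _ vG vG1.
have fiber F : (#|[pred x | f x == F]| <= q ^ (k - h))%N.
  have [[x0 fx0]|nox] := pselect (exists x0, f x0 = F); last first.
    rewrite (@eq_card _ _ pred0) ?card0 // => x /=.
    by apply/negP => /eqP fx; apply: nox; exists x.
  pose I := finset (fun i : 'I_k => [exists j : 'I_q, G i j `&` F != fset0]).
  pose Fam := fun i : 'I_k => if i \in I then pred1 (x0 i) else predT.
  have sub : [pred x | f x == F] \subset family Fam.
    apply/fintype.subsetP => x /[!inE] /eqP fx; apply/familyP => i; rewrite /Fam.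
    case: ifP => // /[!inE] /existsP[j /fset0Pn[v]] /[!inE] /andP[vG vF].
    rewrite /= (fib x i j v) ?fx //.
    by rewrite (fib x0 i j v) ?fx0.
  apply: (leq_trans (subset_leq_card sub)).
  rewrite card_family foldrE big_map big_enum /=.
  have -> : (\prod_(i in 'I_k) #|Fam i| = \prod_(i in ~: I) q)%N.
    rewrite (big_mkcond (fun i => i \in ~: I)) /=; apply: eq_bigr => i _.
    rewrite /Fam finset.in_setC; case: (i \in I) => /=.
      exact: (card1 (x0 i)).
    by rewrite (eq_card (B := 'I_q)) ?card_ord.
  rewrite prod_nat_const leq_pexp2l //.
  have : (#|I| + #|~: I| = k)%N by rewrite cardsC card_ord.
  suff : (h <= #|I|)%N by lia.
  have [_ Fh [phi0 [Hphi0 Hcov0]]] := Hf x0.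
  rewrite fx0 in Hcov0 Fh.
  pose I' := finset (fun i : 'I_k => phi0 i \in F).
  have I'I : I' \subset I.
    apply/fintype.subsetP => i; rewrite !inE => pF.
    apply/existsP; exists (x0 i); apply/fset0Pn; exists (phi0 i).
    by rewrite inE Hphi0 pF.
  apply: leq_trans (subset_leq_card I'I).
  suff : (size (enum_fset F) <= size (map phi0 (enum I')))%N.
    by rewrite size_map -cardE -Fh.
  apply: uniq_leq_size; first exact: fset_uniq.
  move=> g gF; have [i Hi] := Hcov0 g gF.
  by rewrite -Hi map_f // mem_enum inE Hi.
have -> : (q ^ k = #|{ffun 'I_k -> 'I_q}|)%N by rewrite card_ffun !card_ord.
rewrite -sum1_card.
rewrite (eq_bigr (fun x => \sum_(F <- M0) (f x == F : nat))%N); last first.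
  move=> x _.
  have [H1 _ _] := Hf x.
  have H2 : count_mem (f x) (enum_fset M0) = 1%N.
    by rewrite count_uniq_mem ?fset_uniq ?H1.
  rewrite -[1%N]H2 -sum1_count big_mkcond /=.
  apply: eq_bigr => F _; rewrite [f x == F]eq_sym; by case: (F == f x).
rewrite exchange_big /=.
apply: (@leq_trans (\sum_(F <- M0) q ^ (k - h))%N).
  apply: leq_sum => F _.
  apply: leq_trans (fiber F).
  rewrite -sum1_card [X in (_ <= X)%N]big_mkcond /= big_mkcond /=.
  by apply: leq_sum => x _.
by rewrite big_const_seq count_predT iter_addn_0 mulnC.
Qed.
End Comb.

Lemma bin_le_exp n h : ('C(n, h) <= n ^ h)%N.
Proof.
have ff : forall m n, (n ^_ m <= n ^ m)%N.
  elim=> [|m IH] n'; first by [].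
  rewrite ffactnS expnS leq_mul2l; apply/orP; right.
  apply: leq_trans (IH _) _; case: (m) => [|m'] //; by rewrite leq_exp2r // leq_pred.
apply: leq_trans (ff h n); by rewrite -bin_ffact leq_pmulr // fact_gt0.
Qed.

Definition betaf (R : realType) (c t : R) : R := if c * t <= 1 then 1 - c * t else 0.

Lemma final_ineq (R : realType) (n r k h q N0 cnt T S'c : nat) (a t : R) :
  (0 < h)%N -> (0 < k)%N -> q = (r %/ k)%N ->
  (q ^ h <= N0)%N -> (1 <= N0)%N ->
  (cnt + N0 <= T)%N -> (T <= 'C(n, h))%N ->
  a * ('C(n,h))%:R <= cnt%:R -> 0 <= t -> t ^+ h = 1 - a ->
  (n <= S'c + h * r)%N ->
  betaf (2 * h * k)%:R t * n%:R <= S'c%:R.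
Proof.
move=> h0 k0 qE qN0 N01 cT TC aC t0 th nS.
have N0le : (N0%:R : R) <= (t * n%:R) ^+ h.
  have e1 : (N0%:R : R) <= ('C(n,h))%:R - cnt%:R.
    rewrite lerBrDr -natrD ler_nat addnC; exact: leq_trans cT TC.
  apply: (le_trans e1); rewrite exprMn th.
  apply: (@le_trans _ _ ((1 - a) * ('C(n,h))%:R)).
    by rewrite mulrBl mul1r lerD2l lerN2.
  rewrite ler_wpM2l //; first by rewrite -th exprn_ge0.
  by rewrite -natrX ler_nat bin_le_exp.
have tn0 : 0 <= t * n%:R by rewrite mulr_ge0.
have tn1 : 1 <= t * n%:R.
  rewrite leNgt; apply/negP => lt1.
  have := exprn_ilt1 h tn0 lt1; rewrite -lt0n h0 => H.
  have : (1 : R) <= N0%:R by rewrite ler1n.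
  by move=> /le_trans /(_ N0le); rewrite leNgt H.
have qle : (q%:R : R) <= t * n%:R.
  rewrite -(ler_pXn2r h0) ?nnegrE ?ler0n //.
  by apply: le_trans N0le; rewrite -natrX ler_nat.
have rle : (r%:R : R) <= 2 * k%:R * (t * n%:R).
  have := ltn_ceil r k0; rewrite -qE => /ltnW; rewrite -(ler_nat R) natrM.
  move=> /le_trans; apply.
  have k0' : (0 : R) <= k%:R by rewrite ler0n.
  have : (q.+1%:R : R) <= 2 * (t * n%:R) by rewrite -natr1; lra.
  nra.
have hrle : ((h * r)%:R : R) <= (2 * h * k)%:R * t * n%:R.
  rewrite natrM !natrM.
  have -> : 2%:R * h%:R * k%:R * t * n%:R = h%:R * (2%:R * k%:R * (t * n%:R)) :> R by ring.
  by rewrite ler_wpM2l.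
rewrite /betaf; case: ifP => _; last by rewrite mul0r.
rewrite mulrBl mul1r -mulrA.
have : (n%:R : R) <= S'c%:R + (h * r)%:R by rewrite -natrD ler_nat.
move: hrle; set X := (2 * h * k)%:R * t * n%:R; rewrite /X mulrA. lra.
Qed.

Definition tf (R : realType) (h : nat) (a : R) : R := (1 - a) `^ (h%:R^-1).

Lemma tf_prop (R : realType) (h : nat) (a : R) :
  (0 < h)%N -> a < 1 -> 0 < tf h a /\ tf h a ^+ h = 1 - a.
Proof.
move=> h0 a1; have a0 : 0 < 1 - a by rewrite subr_gt0.
split; first by rewrite /tf powR_gt0.
rewrite /tf -powR_mulrn ?powR_ge0 // -powRrM mulVf ?pnatr_eq0 -?lt0n //.
by rewrite powRr1 // ltW.
Qed.

Lemma beta_range (R : realType) (c t : R) : 0 < c -> 0 < t -> 0 <= betaf c t < 1.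
Proof.
move=> c0 t0; rewrite /betaf; case: ifP => H; last by rewrite lexx ltr01.
have : 0 < c * t by rewrite mulr_gt0.
move: H; lra.
Qed.

Lemma beta_lim (R : realType) (h : nat) (c : R) : (0 < h)%N -> 0 < c ->
  betaf c (tf h a) @[a --> (1 : R)^'-] --> (1 : R).
Proof.
move=> h0 c0; apply/cvgrPdist_lt => eps eps0.
pose e' := Num.min eps 1 / (c + 1).
have e'0 : 0 < e' by rewrite /e' divr_gt0 // ?lt_min ?eps0 ?ltr01 //; lra.
have ce' : c * e' < Num.min eps 1.
  rewrite /e' mulrA ltr_pdivrMr; last by lra.
  have : 0 < Num.min eps 1 by rewrite lt_min eps0 ltr01.
  nra.
near=> a.
have ha1 : a < 1 by near: a; exact: nbhs_left_lt.
have ha2 : 1 - e' ^+ h < a.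
  near: a; apply: nbhs_left_gt; rewrite ltrBlDr ltrDl exprn_gt0 //.
have [t0 th] := tf_prop h0 ha1.
have te' : tf h a < e'.
  rewrite -(ltr_pXn2r h0) ?nnegrE ?(ltW t0) ?(ltW e'0) // th; lra.
have cte : c * tf h a < Num.min eps 1.
  apply: le_lt_trans ce'; rewrite ler_wpM2l ?(ltW c0) // ltW //.
have := cte; rewrite lt_min => /andP[c1 c2].
rewrite /betaf ifT; last exact: ltW.
have : 0 < c * tf h a by rewrite mulr_gt0.
move=> ct0; rewrite opprB addrC subrK ger0_norm ?(ltW ct0) //.
Unshelve. all: by end_near.
Qed.

Lemma nnpp (P : Prop) : ~ ~ P -> P.
Proof. by case: (pselect P) => // np /(_ np). Qed.

Unset Implicit Arguments. Set Strict Implicit.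

Theorem theorem5 (R : realType) (V : choiceType) (H : int -> hypergraph V)
    (h k : nat) :
  hypergraph_chain H -> helly_number H h -> colorful_helly_number H k ->
  (h <= k)%N ->
  exists beta : R -> R,
    (forall a : R, 0 < a < 1 -> 0 <= beta a < 1) /\
    (beta a @[a --> (1 : R)^'-] --> (1 : R)) /\
    (forall (l : int) (S : {fset V}) (a : R), 0 < a < 1 ->
       a * ('C(#|` S |%fset, h))%:R <= (count_hedges (H l) h S)%:R ->
       exists S' : {fset V}, (S' `<=` S)%fset /\
         beta a * (#|` S |%fset)%:R <= (#|` S' |%fset)%:R /\
         H (l + 3) [set` S']).
Proof.
move=> [dc mono] helly chelly hk.
have mono1 l X : H l X -> H (l + 1) X by move=> /mono.
have mono2 l X : H l X -> H (l + 2) X.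
  by move=> /mono1 /mono1; rewrite -addrA.
have mono3 l X : H l X -> H (l + 3) X.
  by move=> /mono2 /mono1; rewrite -addrA.
case: (posnP h) => [h0|h0].
  subst h.
  exists (fun a => betaf 1 (tf 1 a)); split; [|split].
  - move=> a /andP[a0 a1]; have [t0 _] := tf_prop (R:=R) (ltn0Sn 0) a1.
    exact: beta_range.
  - exact: beta_lim.
  move=> l S a /andP[a0 a1] Hc.
  exists S; split; first exact: fsubset_refl.
  have [t0 _] := tf_prop (R:=R) (ltn0Sn 0) a1.
  have /andP[b0 b1] := beta_range (ltr01 : (0:R) < 1) t0.
  split; first by rewrite ler_piMl ?ler0n ?ltW.
  have -> : l + 3 = l + 1 + 2 by rewrite -addrA.
  apply: mono2; apply: helly => G [GS [F [F0 ->]]].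
  move/eqP: F0; rewrite cardfs_eq0 => /eqP ->.
  have : (0 < count_hedges (H l) 0 S)%N.
    rewrite lt0n; apply/negP => /eqP c0; move: Hc; rewrite c0 bin0 mulr1.
    by rewrite leNgt a0.
  rewrite lt0n cardfs_eq0 => /fset0Pn[G0].
  rewrite !inE => /andP[_ /andP[/eqP /cardfs0_eq -> /asboolP]].
  done.
have k0 : (0 < k)%N by exact: leq_trans hk.
exists (fun a => betaf (2 * h * k)%:R (tf h a)); split; [|split].
- move=> a /andP[a0 a1]; have [t0 _] := tf_prop (R:=R) h0 a1.
  by apply: beta_range => //; rewrite ltr0n !muln_gt0 h0 k0.
- have c0 : (0 : R) < (2 * h * k)%:R by rewrite ltr0n !muln_gt0 h0 k0.
  exact: (beta_lim h0 c0).
move=> l S a /andP[a0 a1] Hc.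
have [r [e [S' [S'S Scard eP edisj S'good]]]] :=
  greedy (fun G => ~ H (l + 2) [set` G]) h0 S.
exists S'; split => //.
have HS' : H (l + 3) [set` S'].
  have -> : l + 3 = l + 2 + 1 by rewrite -addrA.
  apply: helly => G [GS [F [Fh GE]]]; subst G.
  apply: nnpp; apply: S'good Fh.
  apply/fsubsetP => v vF; have := GS v vF; by [].
split => //.
have [t0 th] := tf_prop (R:=R) h0 a1.
have /andP[b0 b1] : 0 <= betaf (2 * h * k)%:R (tf h a) < 1.
  by apply: beta_range => //; rewrite ltr0n !muln_gt0 h0 k0.
case: (posnP r) => [r0|rpos].
  move: Scard; rewrite r0 muln0 addn0 -(ler_nat R) => Hn.
  apply: le_trans Hn; rewrite ler_piMl ?ler0n ?ltW //.
pose q := (r %/ k)%N.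
pose M0 := [fset G in fpowerset S | (#|` G| == h)%fset && ~~ `[< H l [set` G] >]]%fset.
pose Cnt := [fset G in fpowerset S | (#|` G| == h)%fset && `[< H l [set` G] >]]%fset.
pose P := [fset G in fpowerset S | (#|` G| == h)%fset]%fset.
have M0mem (F : {fset V}) : (F `<=` S)%fset -> #|` F|%fset = h -> ~ H l [set` F] -> F \in M0.
  move=> FS Fh nH; rewrite !inE fpowersetE FS Fh eqxx /=.
  by apply/negP => /asboolP.
have idx_lt (i : 'I_k) (j : 'I_q) : (i * q + j < r)%N.
  apply: (@leq_trans (i.+1 * q)%N); first by rewrite mulSn; have := ltn_ord j; lia.
  apply: (@leq_trans (k * q)%N); first by rewrite leq_mul2r ltn_ord orbT.
  by rewrite mulnC /q leq_trunc_div.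
pose G := fun (i : 'I_k) (j : 'I_q) => e (i * q + j)%N.
have disj i j i' j' v : v \in G i j -> v \in G i' j' -> i = i' /\ j = j'.
  move=> v1 v2; have E := edisj _ _ v (idx_lt i j) (idx_lt i' j') v1 v2.
  have q0 : (0 < q)%N by case: (j) => [m]; case: (q) => //.
  have Ei : i = i' :> nat.
    by have := congr1 (divn^~ q) E; rewrite !divnMDl // !divn_small ?ltn_ord // !addn0.
  have Ej : j = j' :> nat.
    by have := congr1 (modn^~ q) E; rewrite !modnMDl !modn_small ?ltn_ord.
  by split; apply: val_inj.
have Hx (x : {ffun 'I_k -> 'I_q}) : exists F, [/\ F \in M0, #|` F|%fset = h &
      exists phi : 'I_k -> V, (forall i, phi i \in G i (x i)) /\
         (forall g, g \in F -> exists i, phi i = g)].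
  pose Sx := fun i => G i (x i).
  have [F [[phi [Hphi ->]] FnH]] : exists F, colorful_selection Sx F /\ ~ H (l + 1) F.
    apply: nnpp => nE.
    have [j Hj] := chelly Sx (l + 1) (fun F Fs => nnpp (fun nH => nE (ex_intro _ F (conj Fs nH)))).
    have [_ [_ bad]] := eP _ (idx_lt j (x j)).
    by apply: bad; move: Hj; rewrite -addrA.
  have [G' [[G'sub [F' [F'h G'E]]] G'nH]] :
      exists G', is_hsubset h (range phi) G' /\ ~ H l G'.
    apply: nnpp => nE; apply: FnH; apply: helly => G' HG'.
    by apply: nnpp => nH; apply: nE; exists G'.
  subst G'.
  have cov g : g \in F' -> exists i, phi i = g.
    by move=> gF; have [i _ <-] := G'sub g gF; exists i.
  exists F'; split => //; last by exists phi.
  apply: M0mem => //; apply/fsubsetP => g /cov [i <-].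
  have [eS _] := eP _ (idx_lt i (x i)).
  exact: (fsubsetP eS _ (Hphi i)).
have cnt_ineq := counting disj Hx hk.
have qN0 : (q ^ h <= #|` M0|%fset)%N.
  case: (posnP q) => [->|qpos]; first by rewrite exp0n.
  have := cnt_ineq qpos.
  by rewrite -{1}(subnKC hk) expnD leq_pmul2r // expn_gt0 qpos.
have N01 : (1 <= #|` M0|%fset)%N.
  rewrite cardfs_gt0; apply/fset0Pn; exists (e 0%N).
  have [eS [eh ebad]] := eP 0%N rpos.
  by apply: M0mem => // /mono2.
have cT : (count_hedges (H l) h S + #|` M0|%fset <= #|` P|%fset)%N.
  rewrite /count_hedges -/Cnt -cardfsUI.
  have -> : (Cnt `&` M0 = fset0)%fset.
    apply/fsetP => G0; rewrite !inE.
    by case: (`[< H l [set` G0] >]); rewrite ?andbF ?andbT.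
  rewrite cardfs0 addn0; apply: fsubset_leq_card.
  apply/fsubsetP => G0; rewrite !inE => /orP[] /andP[-> /andP[-> _]] //.
have TC := card_hsub S h.
have := final_ineq (R:=R) (q:=q) h0 k0 erefl qN0 N01 cT TC Hc (ltW t0) th Scard.
done.
Qed.
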